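(* Let $X$ be a connected vertex-transitive cubic graph containing a cycle of length $3$. Then $1$ is a simple eigenvalue of $X$ if and only if $X\cong T(G)$ for some connected, bipartite, arc-transitive cubic multigraph $G$.
   Context: The truncation $T(G)$ of a cubic multigraph $G$ is the cubic graph obtained by replacing every vertex $v$ of $G$ by a triangle whose three vertices correspond to the three edge-ends at $v$, each edge $uv$ of $G$ giving an edge between the corresponding vertices of the triangles of $u$ and $v$. Eigenvalues are those of the adjacency matrix; simple means a $1$-dimensional eigenspace. *)

(* Defs.v *)
From mathcomp Require Import all_boot all_order all_algebra all_field.
Set Implicit Arguments. Unset Strict Implicit. Unset Printing Implicit Defensive.
Import GRing.Theory Num.Theory.
Local Open Scope ring_scope.

Definition simple_graph (T : finType) (e : rel T) : Prop :=
  symmetric e /\ irreflexive e.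

Definition cubic_graph (T : finType) (e : rel T) : Prop :=
  forall x : T, #|[set y | e x y]| = 3%N.

Definition connected_graph (T : finType) (e : rel T) : Prop :=
  forall x y : T, connect e x y.

Definition graph_aut (T : finType) (e : rel T) (f : T -> T) : Prop :=
  bijective f /\ forall x y, e (f x) (f y) = e x y.

Definition vertex_transitive (T : finType) (e : rel T) : Prop :=
  forall x y : T, exists f, graph_aut e f /\ f x = y.

Definition has_triangle (T : finType) (e : rel T) : Prop :=
  exists x y z : T, [/\ e x y, e y z & e z x].

Definition adjmx (T : finType) (e : rel T) : 'M[algC]_#|T| :=
  \matrix_(i, j) (e (enum_val i) (enum_val j))%:R.

Definition simple_eigenvalue (T : finType) (e : rel T) (a : algC) : Prop :=
  \rank (eigenspace (adjmx e) a) = 1%N.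

Definition graph_iso (T1 T2 : finType) (e1 : rel T1) (e2 : rel T2) : Prop :=
  exists f : T1 -> T2, bijective f /\ forall x y, e2 (f x) (f y) = e1 x y.

(* ---------- Multigraphs given by darts (edge-ends) ----------
   mg_vert d : the vertex at which the dart d sits;
   mg_alpha d : the other end of the edge containing d (fixed-point-free
   involution; a loop is an edge whose two darts sit at the same vertex). *)
Record mgraph := MGraph {
  mg_V : finType;
  mg_D : finType;
  mg_vert : mg_D -> mg_V;
  mg_alpha : mg_D -> mg_D }.

Definition cubic_mgraph (G : mgraph) : Prop :=
  [/\ involutive (@mg_alpha G),
      (forall d, mg_alpha d != d :> mg_D G) &
      forall v : mg_V G, #|[set d | mg_vert d == v]| = 3%N].

Definition mg_adj (G : mgraph) : rel (mg_V G) :=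
  fun u v => [exists d : mg_D G, (mg_vert d == u) && (mg_vert (mg_alpha d) == v)].

Definition mg_connected (G : mgraph) : Prop :=
  forall u v : mg_V G, connect (@mg_adj G) u v.

Definition mg_bipartite (G : mgraph) : Prop :=
  exists c : mg_V G -> bool,
    forall d : mg_D G, c (mg_vert d) != c (mg_vert (mg_alpha d)).

Definition mg_aut (G : mgraph) (fv : mg_V G -> mg_V G) (fd : mg_D G -> mg_D G) : Prop :=
  [/\ bijective fv, bijective fd,
      (forall d, mg_vert (fd d) = fv (mg_vert d)) &
      (forall d, mg_alpha (fd d) = fd (mg_alpha d))].

Definition mg_arc_transitive (G : mgraph) : Prop :=
  forall d d' : mg_D G, exists fv fd, mg_aut fv fd /\ fd d = d'.

(* truncation T(G): vertices are the darts; two darts are adjacent iff they are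
   distinct darts at the same vertex (triangle) or the two ends of one edge. *)
Definition trunc_adj (G : mgraph) : rel (mg_D G) :=
  fun d d' => ((d != d') && (mg_vert d == mg_vert d')) || (mg_alpha d == d').

(* Main.v *)
Require Import Defs.
From mathcomp Require Import all_boot all_order all_algebra all_field.
From mathcomp Require Import ring.
From Stdlib Require Import Classical.
Set Implicit Arguments. Unset Strict Implicit. Unset Printing Implicit Defensive.
Import GRing.Theory Num.Theory.
Local Open Scope ring_scope.

Definition eigf (T : finType) (e : rel T) (f : T -> algC) :=
  forall y, \sum_x (e x y)%:R * f x = f y.

Lemma sum_enum (T : finType) (F : T -> algC) :
  \sum_(i < #|T|) F (enum_val i) = \sum_x F x.
Proof.
by rewrite (reindex enum_rank) //=; [apply: eq_bigr => x _; rewrite enum_rankK |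
  exists enum_val => x _; rewrite ?enum_valK ?enum_rankK].
Qed.

Lemma ker_eigf (T : finType) (e : rel T) (u : 'rV[algC]_#|T|) :
  u *m (adjmx e - 1%:M) = 0 <-> eigf e (fun x => u 0 (enum_rank x)).
Proof.
rewrite mulmxBr mulmx1; split.
  move=> /eqP; rewrite subr_eq0 => /eqP H y.
  move/matrixP: H => /(_ 0 (enum_rank y)); rewrite mxE => <-.
  rewrite -(@sum_enum T); apply: eq_bigr => i _; rewrite mxE enum_valK enum_rankK mulrC.
  done.
move=> H; apply/eqP; rewrite subr_eq0; apply/eqP/matrixP => i j.
rewrite mxE (ord1 i) -(enum_valK j) -H -(@sum_enum T); apply: eq_bigr => k _.
by rewrite mxE enum_valK mulrC enum_valK.
Qed.

Lemma simple_nz (T : finType) (e : rel T) :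
  simple_eigenvalue e 1 -> exists f, eigf e f /\ exists x, f x != 0.
Proof.
rewrite /simple_eigenvalue /eigenspace => Hr.
set K := kermx _ in Hr.
have nzK : K != 0 by rewrite -mxrank_eq0 Hr.
set u := nz_row K.
have nzu : u != 0 by rewrite nz_row_eq0.
have : u *m (adjmx e - 1%:M) = 0.
  by apply/sub_kermxP; apply: nz_row_sub.
move/ker_eigf => Hf; exists (fun x => u 0 (enum_rank x)); split; first exact: Hf.
have /existsP [j Hj] : [exists j, u 0 j != 0].
  move: nzu; apply: contraR => /existsPn Hz; suff -> : u = 0 by rewrite eqxx. apply/matrixP => i j.
  by rewrite (ord1 i) mxE; apply/eqP; move: (Hz j); rewrite negbK.
by exists (enum_val j); rewrite enum_valK.
Qed.

Lemma simple_of (T : finType) (e : rel T) (f : T -> algC) x0 :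
  eigf e f -> f x0 != 0 ->
  (forall g, eigf e g -> exists c, forall x, g x = c * f x) ->
  simple_eigenvalue e 1.
Proof.
move=> Hf nz Hu; rewrite /simple_eigenvalue /eigenspace.
set v : 'rV[algC]_#|T| := \row_i f (enum_val i).
have Hv : v *m (adjmx e - 1%:M) = 0.
  by apply/ker_eigf => y; rewrite /v; under eq_bigr do rewrite mxE enum_rankK;
     rewrite mxE enum_rankK Hf.
have nzv : v != 0.
  apply: contra nz => /eqP /matrixP /(_ 0 (enum_rank x0)); rewrite !mxE enum_rankK.
  by move=> ->.
have s1 : (kermx (adjmx e - 1%:M) <= v)%MS.
  apply/row_subP => i.
  have : row i (kermx (adjmx e - 1%:M)) *m (adjmx e - 1%:M) = 0.
    by rewrite -row_mul mulmx_ker row0.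
  move/ker_eigf/Hu => [c Hc].
  have -> : row i (kermx (adjmx e - 1%:M)) = c *: v.
    apply/matrixP => a j; rewrite (ord1 a) !mxE -(enum_valK j).
    by move: (Hc (enum_val j)); rewrite !mxE => ->; rewrite enum_valK.
  by rewrite scalemx_sub.
have s2 : (v <= kermx (adjmx e - 1%:M))%MS by apply/sub_kermxP.
apply/eqP; rewrite eqn_leq; apply/andP; split.
  by apply: leq_trans (mxrankS s1) _; rewrite rank_rV nzv.
by apply: leq_trans (mxrankS s2); rewrite rank_rV nzv.
Qed.


Lemma sum_delta (I : finType) (j : I) (F : I -> algC) :
  \sum_i (i == j)%:R * F i = F j.
Proof.
rewrite (bigD1 j) //= eqxx mul1r big1 ?addr0 // => i /negPf ->; by rewrite mul0r.
Qed.

Lemma sum_indic (I : finType) (P : pred I) (F : I -> algC) :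
  \sum_i (P i)%:R * F i = \sum_(i | P i) F i.
Proof.
rewrite [RHS]big_mkcond; apply: eq_bigr => i _; case: (P i); by rewrite ?mul1r ?mul0r.
Qed.

Lemma alg3 (R : comNzRingType) (g g' s s' : R) :
  s - g + g' = g -> s' - g' + g = g' -> 3%:R * g = 2%:R * s + s'.
Proof.
move=> E1 E2.
have -> : s = g + g - g' by rewrite -{1}E1; ring.
have -> : s' = g' + g' - g by rewrite -{1}E2; ring.
ring.
Qed.

Section Mg.
Variable G : mgraph.
Local Notation D := (mg_D G).
Local Notation vt := (@mg_vert G).
Local Notation al := (@mg_alpha G).
Hypothesis cub : cubic_mgraph G.
Hypothesis noloop : forall d, vt (al d) != vt d.

Lemma alK : involutive al. Proof. by case: cub. Qed.
Lemma al_inj : injective al. Proof. exact: inv_inj alK. Qed.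

Definition S (g : D -> algC) v := \sum_(d | vt d == v) g d.

Lemma sum_at_const v (c : algC) : \sum_(d | vt d == v) c = c *+ 3.
Proof.
case: cub => _ _ /(_ v) <-; rewrite -sumr_const; apply: eq_bigl => d; by rewrite inE.
Qed.

Lemma local_eq (g : D -> algC) d :
  \sum_d' ((@trunc_adj G) d' d)%:R * g d' = S g (vt d) - g d + g (al d).
Proof.
have E : forall d', ((@trunc_adj G) d' d)%:R =
   (((d' != d) && (vt d' == vt d))%:R + (d' == al d)%:R : algC).
  move=> d'; rewrite /trunc_adj (inv_eq alK).
  case: (d' =P al d) => [->|_]; last by rewrite orbF addr0.
  rewrite orbT; case: (vt (al d) =P vt d) => [H|]; first by move: (noloop d); rewrite H eqxx.
  by rewrite andbF add0r.
under eq_bigr do rewrite E mulrDl.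
rewrite big_split /= sum_delta sum_indic; congr (_ + _).
rewrite /S [in RHS](bigD1 d) //= addrC addrK; apply: eq_bigl => d'; by rewrite andbC.
Qed.

Lemma eigf_local g : eigf (@trunc_adj G) g <-> forall d, S g (vt d) - g d + g (al d) = g d.
Proof. by split => H d; move: (H d); rewrite local_eq. Qed.

Definition H1 (g : D -> algC) := forall d d', vt d = vt d' -> g d = g d'.
Definition H2 (g : D -> algC) := forall d, g (al d) = - g d.

Lemma eigf_of_H g : H1 g -> H2 g -> eigf (@trunc_adj G) g.
Proof.
move=> h1 h2; apply/eigf_local => d.
have -> : S g (vt d) = g d *+ 3.
  rewrite /S -(sum_at_const (vt d)); apply: eq_bigr => d' /eqP; exact: h1.
by rewrite h2; ring.
Qed.

Lemma three_neq0 : (3%:R : algC) != 0. Proof. by rewrite pnatr_eq0. Qed.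

Lemma H_of_eigf g : eigf (@trunc_adj G) g -> H1 g /\ H2 g.
Proof.
move/eigf_local => E.
have E3 : forall d, 3%:R * g d = 2%:R * S g (vt d) + S g (vt (al d)).
  move=> d; have := E (al d); rewrite alK => E2; have := E d => E1.
  exact: alg3 E1 E2.
have Esum : forall u, \sum_(d | vt d == u) (S g u + S g (vt (al d))) = 0.
  move=> u.
  have h : \sum_(d | vt d == u) 3%:R * g d = \sum_(d | vt d == u) (2%:R * S g u + S g (vt (al d))).
    by apply: eq_bigr => d /eqP <-; rewrite E3.
  move: h; rewrite -mulr_sumr -/(S g u) !big_split /= !sum_at_const => h.
  have -> : \sum_(i | vt i == u) S g (vt (al i)) = 3%:R * S g u - (2%:R * S g u) *+ 3.
    by rewrite h addrAC subrr add0r.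
  ring.
pose t d := S g (vt d) + S g (vt (al d)).
have Q : \sum_d t d * (t d)^* = 0.
  have -> : \sum_d t d * (t d)^* = \sum_d t d * (S g (vt d))^* + \sum_d t d * (S g (vt (al d)))^*.
    by rewrite -big_split; apply: eq_bigr => d _; rewrite /t rmorphD mulrDr.
  have -> : \sum_d t d * (S g (vt (al d)))^* = \sum_d t d * (S g (vt d))^*.
    rewrite (reindex_inj al_inj) /=; apply: eq_bigr => d _; by rewrite /t alK addrC.
  suff -> : \sum_d t d * (S g (vt d))^* = 0 by rewrite addr0.
  rewrite (partition_big vt xpredT) //=; apply: big1 => u _.
  transitivity (\sum_(d | vt d == u) (S g u + S g (vt (al d))) * (S g u)^*).
    by apply: eq_bigr => d /eqP <-.
  by rewrite -mulr_suml Esum mul0r.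
have t0 : forall d, t d = 0.
  move=> d; have := psumr_eq0P (fun i _ => mul_conjC_ge0 (t i)) Q; move/(_ d).
  by move=> /(_ isT) /eqP; rewrite mulf_eq0 conjC_eq0 orbb => /eqP.
have g3 : forall d, 3%:R * g d = S g (vt d).
  move=> d; rewrite E3; have := t0 d; rewrite /t => /eqP; rewrite addr_eq0 => /eqP ->.
  rewrite -mulr_natl; ring.
split.
  move=> d d' h; apply: (mulfI three_neq0); by rewrite !g3 h.
move=> d; apply: (mulfI three_neq0); rewrite g3 mulrN g3.
by have := t0 d; rewrite /t => /eqP; rewrite addr_eq0 => /eqP ->; rewrite opprK.
Qed.



End Mg.

Lemma connect_inv (T : finType) (r : rel T) (P : T -> Prop) :
  (forall x y, r x y -> P x -> P y) -> forall x y, connect r x y -> P x -> P y.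
Proof.
move=> H x y /connectP [p]; elim: p x => [|z p IH] x /=; first by move=> _ ->.
by move=> /andP [rxz pz] Ey Px; apply: (IH z pz Ey (H _ _ rxz Px)).
Qed.

Section Mg2.
Variable G : mgraph.
Local Notation D := (mg_D G).
Local Notation vt := (@mg_vert G).
Local Notation al := (@mg_alpha G).
Hypothesis conn : mg_connected G.

Lemma propagate (g : D -> algC) (Q : algC -> Prop) : H1 g -> H2 g -> (forall z, Q z -> Q (- z)) ->
  forall d0, Q (g d0) -> forall d, Q (g d).
Proof.
move=> h1 h2 hQ d0 Q0 d.
pose P v := forall d, vt d = v -> Q (g d).
suff : P (vt d) by apply.
apply: (@connect_inv _ (@mg_adj G) P _ (vt d0) (vt d) (conn _ _)).

  move=> u v /existsP [d' /andP [/eqP hu /eqP hv]] Pu d'' hd''.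
  rewrite (h1 d'' (al d')); last by rewrite hd''.
  by rewrite h2; apply: hQ; apply: Pu.
by move=> d' /(h1 d' d0) ->.
Qed.

Lemma bip_of_eig (g : D -> algC) d1 : H1 g -> H2 g -> g d1 != 0 -> mg_bipartite G.
Proof.
move=> h1 h2 nz.
have hQ : forall z, (fun z => z = g d1 \/ z = - g d1) z -> (fun z => z = g d1 \/ z = - g d1) (- z).
  by move=> z [->|->]; [right|left; rewrite opprK].
have pm : forall d, g d = g d1 \/ g d = - g d1.
  move=> d; exact: (propagate h1 h2 hQ (or_introl erefl) d).
have cE : forall d, [exists d', (vt d' == vt d) && (g d' == g d1)] = (g d == g d1).
  move=> d; apply/existsP/idP => [[d' /andP [/eqP h /eqP <-]]|h].
    by rewrite (h1 d d').
  by exists d; rewrite eqxx.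
exists (fun v => [exists d', (vt d' == v) && (g d' == g d1)]) => d.
rewrite cE.
have -> : [exists d', (vt d' == vt (al d)) && (g d' == g d1)] = (g (al d) == g d1) by apply: cE.
rewrite h2.
have nn : - g d1 != g d1.
  apply: contra nz => /eqP h; have : g d1 + g d1 = 0 by rewrite -{1}h addNr.
  by move/eqP; rewrite -mulr2n -mulr_natr mulf_eq0 pnatr_eq0 orbF.
case: (pm d) => ->; first by rewrite eqxx (negbTE nn).
by rewrite opprK eqxx (negbTE nn).
Qed.

Lemma uniq_H (g g0 : D -> algC) d0 : H1 g -> H2 g -> H1 g0 -> H2 g0 -> g0 d0 != 0 ->
  exists c, forall d, g d = c * g0 d.
Proof.
move=> h1 h2 k1 k2 nz; exists (g d0 / g0 d0) => d.
pose h x := g x - g d0 / g0 d0 * g0 x.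
have e1 : H1 h by move=> x y hxy; rewrite /h (h1 x y hxy) (k1 x y hxy).
have e2 : H2 h by move=> x; rewrite /h h2 k2 mulrN opprD.
have : h d = 0.
  have hQ : forall z : algC, (fun z : algC => z = 0) z -> (fun z : algC => z = 0) (- z) by move=> z /= ->; rewrite oppr0.
  apply: (propagate e1 e2 hQ (d0 := d0)).
  by rewrite /h divfK // subrr.
by move/eqP; rewrite subr_eq0 => /eqP.
Qed.

End Mg2.

Lemma noloop_bip (G : mgraph) : mg_bipartite G -> forall d, @mg_vert G (@mg_alpha G d) != @mg_vert G d.
Proof. by move=> [c Hc] d; apply: contra (Hc d) => /eqP ->. Qed.

Lemma eig_of_bip (G : mgraph) : mg_bipartite G ->
  exists g0 : mg_D G -> algC, [/\ H1 g0, H2 g0 & forall d, g0 d != 0].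
Proof.
move=> [c Hc]; exists (fun d => if c (mg_vert d) then 1 else -1); split.
- by move=> d d' ->.
- move=> d; move: (Hc d); case: (c _); case: (c _) => //= _; by rewrite opprK.
- by move=> d; case: (c _); rewrite ?oppr_eq0 oner_eq0.
Qed.


Lemma k4alg (a b c d : algC) : a = b + c + d -> b = a + c + d -> c = a + b + d ->
  d = a + b + c -> [/\ a = 0, b = 0, c = 0 & d = 0].
Proof.
move=> /eqP; rewrite -subr_eq0 => /eqP h1.
move=> /eqP; rewrite -subr_eq0 => /eqP h2.
move=> /eqP; rewrite -subr_eq0 => /eqP h3.
move=> /eqP; rewrite -subr_eq0 => /eqP h4.
have two : (2%:R : algC) != 0 by rewrite pnatr_eq0.
have z2 : forall x : algC, x * 2%:R = 0 -> x = 0.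
  by move=> x /eqP; rewrite mulf_eq0 (negbTE two) orbF => /eqP.
have s0 : a + b + c + d = 0.
  apply: z2; have -> : (a + b + c + d) * 2%:R =
    - ((a - (b + c + d)) + (b - (a + c + d)) + (c - (a + b + d)) + (d - (a + b + c))) by ring.
  by rewrite h1 h2 h3 h4 !addr0 oppr0.
split; apply: z2.
- have -> : a * 2%:R = (a + b + c + d) + (a - (b + c + d)) by ring. by rewrite s0 h1 addr0.
- have -> : b * 2%:R = (a + b + c + d) + (b - (a + c + d)) by ring. by rewrite s0 h2 addr0.
- have -> : c * 2%:R = (a + b + c + d) + (c - (a + b + d)) by ring. by rewrite s0 h3 addr0.
- have -> : d * 2%:R = (a + b + c + d) + (d - (a + b + c)) by ring. by rewrite s0 h4 addr0.
Qed.

Section X.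
Variables (T : finType) (e : rel T).
Hypothesis sym : symmetric e.
Hypothesis irr : irreflexive e.
Hypothesis cub : cubic_graph e.

Lemma neq_of_e x y : e x y -> x != y.
Proof. by apply: contraTneq => ->; rewrite irr. Qed.

Lemma card3 (a b c : T) : a != b -> a != c -> b != c -> #|[set a; b; c]| = 3.
Proof.
move=> ab ac bc; rewrite setUC cardsU1 cards2 !inE ab negb_or.
by rewrite eq_sym ac eq_sym bc.
Qed.

Lemma N3 x a b c : e x a -> e x b -> e x c -> a != b -> a != c -> b != c ->
  [set y | e x y] = [set a; b; c].
Proof.
move=> xa xb xc ab ac bc; apply/eqP; rewrite eq_sym eqEcard cub card3 // andbT.
by apply/subsetP => y; rewrite !inE => /orP [/orP []|] /eqP ->.
Qed.

Lemma N3m x a b c : e x a -> e x b -> e x c -> a != b -> a != c -> b != c ->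
  forall y, e x y = [|| y == a, y == b | y == c].
Proof.
move=> xa xb xc ab ac bc y.
by move/setP: (N3 xa xb xc ab ac bc) => /(_ y); rewrite !inE orbA.
Qed.

Lemma third x a b : e x a -> e x b -> exists c, [/\ e x c, c != a & c != b].
Proof.
move=> xa xb.
have : ~~ ([set y | e x y] \subset [set a; b]).
  apply/negP => /subset_leq_card; rewrite cub cards2; by case: (a != b).
case/subsetPn => c; rewrite !inE negb_or => xc /andP [ca cb]; by exists c.
Qed.

Lemma sum_nb y p q r (f : T -> algC) : e y p -> e y q -> e y r -> p != q -> p != r -> q != r ->
  \sum_z (e z y)%:R * f z = f p + f q + f r.
Proof.
move=> yp yq yr pq pr qr.
rewrite sum_indic.
have -> : \sum_(z | e z y) f z = \sum_(z in [set p; q; r]) f z.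
  apply: eq_bigl => z; by rewrite -(N3 yp yq yr pq pr qr) inE sym.
rewrite setUC big_setU1 /=; last by rewrite !inE negb_or eq_sym pr eq_sym qr.
rewrite setUC big_setU1 /= ?big_set1 ?inE 1?eq_sym //; ring.
Qed.

Definition P2 x := exists a b c, [/\ e x a, e x b, e x c, a != c & (e a b && e b c)].
Definition intri x := exists a b, [/\ e x a, e x b & e a b].

Lemma P2_aut f x : graph_aut e f -> P2 x -> P2 (f x).
Proof.
move=> [[g fg gf] hf] [a [b [c [xa xb xc ac /andP [ab bc]]]]].
exists (f a), (f b), (f c); rewrite !hf (inj_eq (can_inj fg)) ab bc; by split.
Qed.

Lemma intri_aut f x : graph_aut e f -> intri x -> intri (f x).
Proof.
move=> [[g fg gf] hf] [a [b [xa xb ab]]].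
exists (f a), (f b); rewrite !hf; by split.
Qed.

Lemma P2_ac x a b c : e x a -> e x b -> e x c -> a != c -> e a b -> e b c -> P2 a -> e a c.
Proof.
move=> xa xb xc ac ab bc [p [q [r [ap aq ar pr /andP [pq qr]]]]].
have xa' := neq_of_e xa; have xb' := neq_of_e xb; have xc' := neq_of_e xc.
have ab' := neq_of_e ab; have bc' := neq_of_e bc.
have Nx := N3m xa xb xc ab' ac bc'.
have Nb := N3m (x:=b) (a:=x) (b:=a) (c:=c) (etrans (sym b x) xb) (etrans (sym b a) ab) bc xa' xc' ac.
have pq' := neq_of_e pq; have qr' := neq_of_e qr.
case: (q =P x) => [Eq|nqx].
  subst q; move: (Nx p) (Nx r); rewrite (sym x p) pq qr /= => /esym Hp /esym Hr; move: Hp Hr.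
  case/or3P => /eqP Ep; subst p; first by rewrite irr in ap.
    case/or3P => /eqP Er; subst r; first by rewrite irr in ar.
      by rewrite eqxx in pr.
    done.
  done.
case: (q =P b) => [Eq|nqb].
  subst q; move: (Nb p) (Nb r); rewrite (sym b p) pq qr /= => /esym Hp /esym Hr; move: Hp Hr.
  case/or3P => /eqP Ep; subst p.
  - case/or3P => /eqP Er; subst r; [by rewrite eqxx in pr | by rewrite irr in ar | done].
  - by rewrite irr in ap.
  - done.
have Na := N3m (x:=a) (a:=x) (b:=b) (c:=q) (etrans (sym a x) xa) ab aq xb' (introN eqP (fun h => nqx (esym h))) (introN eqP (fun h => nqb (esym h))).
have : p \in [:: x; b].
  move: (Na p); rewrite ap => /esym /or3P [] /eqP Ep; subst p; rewrite ?inE ?eqxx ?orbT //.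
  by rewrite eqxx in pq'.
rewrite !inE => /orP [] /eqP Ep; subst p.
  move: (Nx q); rewrite pq => /esym /or3P [] /eqP Eq.
  - by rewrite Eq irr in aq.
  - by exfalso; exact: nqb Eq.
  - by rewrite -Eq.
move: (Nb q); rewrite pq => /esym /or3P [] /eqP Eq.
- by exfalso; exact: nqx Eq.
- by rewrite Eq irr in aq.
- by rewrite -Eq.
Qed.


Lemma K4_zero (conn : connected_graph e) (vtr : vertex_transitive e) f :
  eigf e f -> (exists x, P2 x) -> forall z, f z = 0.
Proof.
move=> Hf [x Px] z.
have PA : forall y, P2 y by move=> y; have [g [ag <-]] := vtr x y; exact: P2_aut.
case: (Px) => [a [b [c [xa xb xc ac /andP [ab bc]]]]].
have ac' := P2_ac xa xb xc ac ab bc (PA a).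
have xa' := neq_of_e xa; have xb' := neq_of_e xb; have xc' := neq_of_e xc.
have ab' := neq_of_e ab; have bc' := neq_of_e bc.
have ex := Hf x; rewrite (sum_nb f xa xb xc ab' ac bc') in ex.
have ea := Hf a; rewrite (sum_nb f (etrans (sym a x) xa) ab ac' xb' xc' bc') in ea.
have eb := Hf b; rewrite (sum_nb f (etrans (sym b x) xb) (etrans (sym b a) ab) bc xa' xc' ac) in eb.
have ec := Hf c; rewrite (sum_nb f (etrans (sym c x) xc) (etrans (sym c a) ac') (etrans (sym c b) bc) xa' xb' ab') in ec.
have [fx fa fb fc] := k4alg (esym ex) (esym ea) (esym eb) (esym ec).
have Nx := N3m xa xb xc ab' ac bc'.
have Na := N3m (x:=a) (etrans (sym a x) xa) ab ac' xb' xc' bc'.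
have Nb := N3m (x:=b) (etrans (sym b x) xb) (etrans (sym b a) ab) bc xa' xc' ac.
have Nc := N3m (x:=c) (etrans (sym c x) xc) (etrans (sym c a) ac') (etrans (sym c b) bc) xa' xb' ab'.
pose K := [set x; a; b; c].
have cl : forall u v, e u v -> u \in K -> v \in K.
  move=> u v uv; rewrite !inE => /orP [/orP [/orP []|]|] /eqP Eu; subst u.
  - by move: (Nx v); rewrite uv => /esym /or3P [] /eqP ->; rewrite eqxx ?orbT.
  - by move: (Na v); rewrite uv => /esym /or3P [] /eqP ->; rewrite eqxx ?orbT.
  - by move: (Nb v); rewrite uv => /esym /or3P [] /eqP ->; rewrite eqxx ?orbT.
  - by move: (Nc v); rewrite uv => /esym /or3P [] /eqP ->; rewrite eqxx ?orbT.
have : z \in K.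
  apply: (connect_inv (P := fun v => v \in K) cl (conn x z)).
  by rewrite !inE eqxx.
by rewrite !inE => /orP [/orP [/orP []|]|] /eqP ->.
Qed.

End X.


Section Y.
Variables (T : finType) (e : rel T).
Hypothesis sym : symmetric e.
Hypothesis irr : irreflexive e.
Hypothesis cub : cubic_graph e.
Hypothesis noP2 : forall x, ~ P2 e x.
Hypothesis allT : forall x, intri e x.

Definition St x a b c :=
  [/\ e x a, e x b, e x c, e a b & [/\ a != c, b != c, ~~ e a c & ~~ e b c]].

Lemma struct x : exists a b c, St x a b c.
Proof.
have [a [b [xa xb ab]]] := allT x.
have [c [xc ca cb]] := third cub xa xb.
exists a, b, c; split => //; split; rewrite 1?eq_sym //.
- apply/negP => ac; apply: (noP2 (x:=x)); exists b, a, c; rewrite (sym b a) ab ac.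
  by split => //; rewrite eq_sym.
- apply/negP => bc; apply: (noP2 (x:=x)); exists a, b, c; rewrite ab bc.
  by split => //; rewrite eq_sym.
Qed.

Definition common x y := [exists z, e x z && e y z].
Definition R x y := (x == y) || (e x y && common x y).

Lemma R_char x a b c : St x a b c -> forall y, R x y = [|| y == x, y == a | y == b].
Proof.
case=> xa xb xc ab [ac bc nac nbc] y.
have ab' := neq_of_e irr ab.
have Nx := N3m cub xa xb xc ab' ac bc.
rewrite /R (eq_sym x y).
have [->|nyx] := eqVneq y x; first by [].
rewrite /= Nx.
have [->|nya] := eqVneq y a.
  by rewrite /=; apply/existsP; exists b; rewrite xb ab.
have [->|nyb] := eqVneq y b.
  by rewrite orbT /=; apply/existsP; exists a; rewrite xa sym ab.
rewrite /=.
have [->|nyc] := eqVneq y c; last by [].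
rewrite /=; apply/negbTE/existsPn => z; apply/negP => /andP [xz cz].
move: (Nx z); rewrite xz => /esym /or3P [] /eqP Ez; rewrite Ez in cz.
- by rewrite sym cz in nac.
- by rewrite sym cz in nbc.
- by rewrite irr in cz.
Qed.

Lemma R_sym x y : R x y = R y x.
Proof.
rewrite /R eq_sym sym; congr (_ || (_ && _)).
by apply/existsP/existsP => [] [z /andP [h1 h2]]; exists z; rewrite h1 h2.
Qed.

Lemma Rxx x : R x x. Proof. by rewrite /R eqxx. Qed.

Lemma R_trans y x z : R x y -> R y z -> R x z.
Proof.
have [a [b [c S]]] := struct y.
have S' := S; case: S' => ya yb yc ab _.
have Rab : R a b by rewrite /R ab /=; apply/orP; right; apply/existsP; exists y; rewrite !(sym _ y) ya yb.
rewrite R_sym !(R_char S) => /or3P [] /eqP -> /or3P [] /eqP ->;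
  rewrite ?Rxx ?(R_char S) ?eqxx ?orbT //; rewrite ?Rab //.
- by rewrite R_sym (R_char S) eqxx !orbT.
- by rewrite R_sym (R_char S) eqxx !orbT.
- by rewrite R_sym.
Qed.

Definition tri x := [set y | R x y].

Lemma tri_eq x y : (tri x == tri y) = R x y.
Proof.
apply/eqP/idP => [E | Rxy].
  have : y \in tri y by rewrite inE Rxx.
  by rewrite -E inE.
apply/setP => z; rewrite !inE; apply/idP/idP => h.
  by apply: R_trans h; rewrite R_sym.
exact: R_trans h.
Qed.

Lemma card_tri x : #|tri x| = 3%N.
Proof.
have [a [b [c S]]] := struct x.
have S' := S; case: S' => xa xb _ ab _.
have -> : tri x = [set x; a; b] by apply/setP => y; rewrite !inE (R_char S) orbA.
by rewrite card3 // ?(neq_of_e irr xa) ?(neq_of_e irr xb) ?(neq_of_e irr ab).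
Qed.

Definition alpha x := odflt x [pick y | e x y && ~~ R x y].

Lemma third_uniq x a b c : St x a b c -> forall z, e x z -> ~~ R x z -> z = c.
Proof.
move=> S z xz; have S' := S; case: S' => xa xb xc ab [ac bc _ _].
rewrite (R_char S) !negb_or => /and3P [zx za zb].
move: (N3m cub xa xb xc (neq_of_e irr ab) ac bc z); rewrite xz => /esym /or3P [] /eqP Ez //.
- by rewrite Ez eqxx in za.
- by rewrite Ez eqxx in zb.
Qed.

Lemma alpha_spec x : e x (alpha x) && ~~ R x (alpha x).
Proof.
rewrite /alpha; case: pickP => [y //| H]; exfalso.
have [a [b [c S]]] := struct x.
have S' := S; case: S' => xa xb xc ab [ac bc _ _].
move: (H c); rewrite xc (R_char S) /= !negb_or eq_sym (neq_of_e irr xc) /=.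
by rewrite eq_sym ac eq_sym bc.
Qed.

Lemma alpha_uniq x y : e x y -> ~~ R x y -> y = alpha x.
Proof.
have [a [b [c S]]] := struct x => xy nR.
have /andP [h1 h2] := alpha_spec x.
by rewrite (third_uniq S xy nR) (third_uniq S h1 h2).
Qed.

Lemma alphaK : involutive alpha.
Proof.
move=> x; have /andP [h1 h2] := alpha_spec x.
by symmetry; apply: alpha_uniq; [rewrite sym | rewrite R_sym].
Qed.

Lemma R_aut f x y : graph_aut e f -> R (f x) (f y) = R x y.
Proof.
move=> [[g fg gf] hf]; rewrite /R (inj_eq (can_inj fg)) hf; congr (_ || (_ && _)).
apply/existsP/existsP => [[z /andP [h1 h2]]|[z /andP [h1 h2]]].
  by exists (g z); rewrite -(hf x) -(hf y) gf h1 h2.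
by exists (f z); rewrite !hf h1 h2.
Qed.

Lemma tri_aut f x : graph_aut e f -> f @: tri x = tri (f x).
Proof.
move=> A; have [[g fg gf] hf] := A.
apply/setP => z; rewrite -{1}(gf z) (mem_imset _ _ (can_inj fg)) !inE.
by rewrite -[in RHS](gf z) R_aut.
Qed.

Lemma alpha_aut f x : graph_aut e f -> alpha (f x) = f (alpha x).
Proof.
move=> A; have [_ hf] := A; have /andP [h1 h2] := alpha_spec x.
by symmetry; apply: alpha_uniq; rewrite ?hf ?R_aut.
Qed.

Lemma trunc_char d d' : ((d != d') && R d d') || (alpha d == d') = e d d'.
Proof.
have /andP [ea na] := alpha_spec d.
case E: (e d d').
  case Rd: (R d d'); first by rewrite andbT (neq_of_e irr E).
  by rewrite -(alpha_uniq E (negbT Rd)) eqxx orbT.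
apply/negbTE; rewrite negb_or; apply/andP; split.
  by apply/negP => /andP [nd]; rewrite /R (negbTE nd) /= E.
by apply/negP => /eqP Ed; rewrite -Ed ea in E.
Qed.

Definition Vt := {A : {set T} | [exists y, A == tri y]}.
Definition vert x : Vt := exist _ (tri x) (introT existsP (ex_intro _ x (eqxx (tri x)))).
Definition Gr := MGraph vert alpha.

Lemma vert_eq d d' : (vert d == vert d') = R d d'.
Proof. by rewrite -val_eqE /= tri_eq. Qed.

Lemma vert_surj (w : Vt) : exists y, w = vert y.
Proof.
case: w => A HA; have /existsP [y /eqP Ey] := HA; exists y.
by apply: val_inj => /=.
Qed.

Lemma Gr_cubic : cubic_mgraph Gr.
Proof.
split.
- exact: alphaK.
- by move=> d /=; have /andP [ea _] := alpha_spec d; rewrite eq_sym (neq_of_e irr ea).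
- move=> w; have [y ->] := vert_surj w.
  rewrite -(card_tri y); apply: eq_card => d; rewrite !inE /= vert_eq R_sym.
  done.
Qed.

Lemma Gr_noloop d : @mg_vert Gr (@mg_alpha Gr d) != @mg_vert Gr d.
Proof. by rewrite /= vert_eq R_sym; case/andP: (alpha_spec d). Qed.

Lemma Gr_conn : connected_graph e -> mg_connected Gr.
Proof.
move=> conn u v; have [x ->] := vert_surj u; have [y ->] := vert_surj v.
apply: (connect_inv (P := fun z => connect (@mg_adj Gr) (vert x) (vert z)) _ (conn x y)); last exact: connect0.
move=> z w zw H; apply: connect_trans H _.
case Rzw: (R z w).
  by have /eqP -> : vert z == vert w by rewrite vert_eq.
rewrite (alpha_uniq zw (negbT Rzw)); apply: connect1; apply/existsP; exists z.
by rewrite !eqxx.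
Qed.

Lemma Gr_at : vertex_transitive e -> mg_arc_transitive Gr.
Proof.
move=> vtr d d'; have [f [A fd]] := vtr d d'.
have A' := A; case: A' => [[g fg gf] hf].
pose fv (v : Vt) : Vt := insubd v (f @: val v).
have fvE : forall v, val (fv v) = f @: val v.
  move=> [B HB]; rewrite /fv insubdK //=.
  have /existsP [y /eqP ->] := HB; apply/existsP; exists (f y); by rewrite tri_aut.
exists fv, f; split => //; split.
- apply: injF_bij => v w /(congr1 val); rewrite !fvE => /(imset_inj (can_inj fg)) h.
  exact: val_inj.
- by exists g.
- by move=> x; apply: val_inj; rewrite fvE /= tri_aut.
- by move=> x /=; apply: alpha_aut.
Qed.

Lemma Gr_iso : graph_iso e (@trunc_adj Gr).
Proof.
exists id; split; first by exists id.
by move=> x y; rewrite /trunc_adj /= vert_eq trunc_char.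
Qed.

Lemma Gr_bip f x : connected_graph e -> eigf e f -> f x != 0 -> mg_bipartite Gr.
Proof.
move=> conn Hf nz.
have Ht : eigf (@trunc_adj Gr) f.
  move=> y; rewrite -(Hf y); apply: eq_bigr => z _.
  by rewrite /trunc_adj /= vert_eq trunc_char.
have [h1 h2] := H_of_eigf Gr_cubic Gr_noloop Ht.
exact: (bip_of_eig (Gr_conn conn) h1 h2 nz).
Qed.

End Y.


Lemma eigf_iso (T1 T2 : finType) (e1 : rel T1) (e2 : rel T2) (phi : T1 -> T2) :
  bijective phi -> (forall x y, e2 (phi x) (phi y) = e1 x y) ->
  forall g, eigf e2 g <-> eigf e1 (g \o phi).
Proof.
move=> bphi hphi g.
have re : forall F : T2 -> algC, \sum_z F z = \sum_x F (phi x).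
  by move=> F; rewrite (reindex phi) //; exact: onW_bij.
split => H y.
  by rewrite /= -H re; apply: eq_bigr => x _; rewrite hphi.
have [psi _ phipsi] := bphi.
rewrite re; have := H (psi y); rewrite /= phipsi => <-; apply: eq_bigr => x _.
by rewrite -hphi phipsi.
Qed.

Lemma eigf_ext (T : finType) (e : rel T) f f' : f =1 f' -> eigf e f -> eigf e f'.
Proof. by move=> E H y; rewrite -E -(H y); apply: eq_bigr => x _; rewrite E. Qed.

Theorem corollary6p4 (T : finType) (e : rel T) :
  simple_graph e -> cubic_graph e -> connected_graph e ->
  vertex_transitive e -> has_triangle e ->
  (simple_eigenvalue e 1%R <->
   exists G : mgraph,
     [/\ cubic_mgraph G, mg_connected G, mg_bipartite G,
         mg_arc_transitive G & graph_iso e (@trunc_adj G)]).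
Proof.
move=> [sym irr] cub conn vtr [x0 [y0 [z0 [h1 h2 h3]]]].
split.
- move/simple_nz => [f [Hf [x nz]]].
  case: (classic (exists x, P2 e x)) => [HP | nP].
    by move: nz; rewrite (K4_zero sym irr cub conn vtr Hf HP x) eqxx.
  have noP2 : forall x, ~ P2 e x by move=> y Py; apply: nP; exists y.
  have allT : forall x, intri e x.
    have T0 : intri e x0 by exists y0, z0; rewrite h1 h2 sym h3.
    by move=> y; have [g [ag <-]] := vtr x0 y; exact: intri_aut.
  exists (Gr e); split.
  + exact: Gr_cubic sym irr cub noP2 allT.
  + exact: Gr_conn sym irr cub noP2 allT conn.
  + have := Gr_bip sym irr cub noP2 allT conn Hf nz. done.
  + exact: Gr_at sym irr cub noP2 allT vtr.
  + exact: Gr_iso sym irr cub noP2 allT.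
- move=> [G [cubG connG bipG atG [phi [bphi hphi]]]].
  have nl := noloop_bip bipG.
  have [g0 [k1 k2 nz0]] := eig_of_bip bipG.
  have Hg0 := eigf_of_H cubG nl k1 k2.
  apply: (@simple_of _ _ (g0 \o phi) x0).
  + by apply/(eigf_iso bphi hphi).
  + exact: nz0.
  + move=> g Hg; have [psi psiphi phipsi] := bphi.
    have Hg' : eigf (@trunc_adj G) (g \o psi).
      apply/(eigf_iso bphi hphi); apply: eigf_ext Hg => y /=; by rewrite psiphi.
    have [m1 m2] := H_of_eigf cubG nl Hg'.
    have [c Hc] := uniq_H connG m1 m2 k1 k2 (nz0 (phi x0)).
    by exists c => y; rewrite /= -Hc /= psiphi.
Qed.
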